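(* Let $(H;\langle\cdot,\cdot\rangle)$ be a real inner product space with norm $\|\cdot\|$, and let $a,b,x,y\in H\setminus\{0\}$. (i) If there exist $\delta_1,\delta_2\in(0,1]$ with $\delta_1+\delta_2\ge 1$ such that $$\frac{\langle x,a\rangle}{\|x\|\,\|a\|}\ge\delta_1,\qquad \frac{\langle y,a\rangle}{\|y\|\,\|a\|}\ge\delta_2,$$ then $$\frac{\langle x,y\rangle}{\|x\|\,\|y\|}\ge \frac12(\delta_1+\delta_2)^2-\frac32\qquad(\ge -1).$$ (ii) If there exists $\mu_1\in\mathbb{R}$ with $0\le\mu_1\le 1$ such that $\mu_1\|a\|\,\|b\|\le \dfrac{\langle x,a\rangle\langle x,b\rangle}{\|x\|^2}$, then $$-1\le 2\mu_1-1\le \frac{\langle a,b\rangle}{\|a\|\,\|b\|}.$$ If there exists $\mu_2\in\mathbb{R}$ with $-1\le\mu_2\le 0$ such that $\dfrac{\langle x,a\rangle\langle x,b\rangle}{\|x\|^2}\le \mu_2\|a\|\,\|b\|$, then $$\frac{\langle a,b\rangle}{\|a\|\,\|b\|}\le 2\mu_2+1\le 1.$$ *)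

(* Defs.v *)
From mathcomp Require Import all_boot all_order all_algebra.
From mathcomp Require Import reals.
Set Implicit Arguments. Unset Strict Implicit. Unset Printing Implicit Defensive.
Import Order.TTheory GRing.Theory Num.Theory.
Local Open Scope ring_scope.

Definition is_inner_product (R : realType) (V : lmodType R) (ip : V -> V -> R) : Prop :=
  [/\ (forall x y : V, ip x y = ip y x),
      (forall (c : R) (x y z : V), ip (c *: x + y) z = c * ip x z + ip y z),
      (forall x : V, 0 <= ip x x) &
      (forall x : V, ip x x = 0 -> x = 0)].

Definition ipnorm (R : realType) (V : lmodType R) (ip : V -> V -> R) (x : V) : R :=
  Num.sqrt (ip x x).

(* Main.v *)
Require Import Defs.
From mathcomp Require Import all_boot all_order all_algebra.
From mathcomp Require Import reals.
From mathcomp Require Import ring lra.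
Import Order.TTheory GRing.Theory Num.Theory.
Local Open Scope ring_scope.

Lemma ip0l {R : realType} {V : lmodType R} {ip : V -> V -> R}
  (Hip : is_inner_product ip) (z : V) : ip 0 z = 0.
Proof.
case: Hip => _ Hl _ _.
have := Hl 1 0 0 z; rewrite scale1r addr0 mul1r => H.
have := congr1 (fun t => t - ip 0 z) H; rewrite /= addrK subrr => ->//.
Qed.

Lemma ipDl {R : realType} {V : lmodType R} {ip : V -> V -> R}
  (Hip : is_inner_product ip) (u v z : V) : ip (u + v) z = ip u z + ip v z.
Proof. by case: Hip => _ Hl _ _; rewrite -(scale1r u) Hl mul1r scale1r. Qed.

Lemma ipZl {R : realType} {V : lmodType R} {ip : V -> V -> R}
  (Hip : is_inner_product ip) (c : R) (u z : V) : ip (c *: u) z = c * ip u z.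
Proof.
have H0 := ip0l Hip z.
by case: Hip => _ Hl _ _; rewrite -(addr0 (c *: u)) Hl H0 addr0.
Qed.

Lemma ipNl {R : realType} {V : lmodType R} {ip : V -> V -> R}
  (Hip : is_inner_product ip) (u z : V) : ip (- u) z = - ip u z.
Proof. by rewrite -scaleN1r ipZl // mulN1r. Qed.

Lemma ipS {R : realType} {V : lmodType R} {ip : V -> V -> R}
  (Hip : is_inner_product ip) (u z : V) : ip u z = ip z u.
Proof. by case: Hip. Qed.

Lemma ipCS {R : realType} {V : lmodType R} {ip : V -> V -> R}
  (Hip : is_inner_product ip) (z w : V) : ip z w ^+ 2 <= ip z z * ip w w.
Proof.
have Hpos : forall u, 0 <= ip u u by case: Hip.
have Hdef : forall u, ip u u = 0 -> u = 0 by case: Hip.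
have [Hw0|Hw0] := eqVneq (ip w w) 0.
  have -> := Hdef _ Hw0.
  by rewrite ipS // ip0l // expr0n /= ip0l // mulr0.
have Hwp : 0 < ip w w by rewrite lt0r Hw0 Hpos.
set t := ip z w / ip w w.
have H := Hpos (z - t *: w).
rewrite ipDl // ipNl // ipZl // (ipS Hip z (z - _)) (ipS Hip w (z - _)) in H.
rewrite !ipDl // !ipNl // !ipZl // (ipS Hip w z) in H.
have Ht : t * ip w w = ip z w by rewrite /t divfK.
rewrite Ht subrr mulr0 subr0 in H.
have -> : ip z w ^+ 2 = t * ip z w * ip w w by rewrite -mulrA (mulrC (ip z w)) mulrA Ht expr2.
by rewrite ler_pM2r // -subr_ge0.
Qed.

Lemma sq_le {R : realType} (t m : R) : 0 <= m -> t ^+ 2 <= m ^+ 2 -> t <= m.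
Proof. move=> hm h; nra. Qed.

Theorem theorem1p5 (R : realType) (V : lmodType R) (ip : V -> V -> R)
  (Hip : is_inner_product ip) (a b x y : V)
  (ha : a != 0) (hb : b != 0) (hx : x != 0) (hy : y != 0) :
  (* (i) *)
  (forall d1 d2 : R, 0 < d1 <= 1 -> 0 < d2 <= 1 -> 1 <= d1 + d2 ->
     d1 <= ip x a / (ipnorm ip x * ipnorm ip a) ->
     d2 <= ip y a / (ipnorm ip y * ipnorm ip a) ->
     (d1 + d2) ^+ 2 / 2 - 3 / 2 <= ip x y / (ipnorm ip x * ipnorm ip y) /\
     -1 <= (d1 + d2) ^+ 2 / 2 - 3 / 2) /\
  (* (ii), first part *)
  (forall mu1 : R, 0 <= mu1 <= 1 ->
     mu1 * ipnorm ip a * ipnorm ip b <= ip x a * ip x b / ipnorm ip x ^+ 2 ->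
     -1 <= 2 * mu1 - 1 /\ 2 * mu1 - 1 <= ip a b / (ipnorm ip a * ipnorm ip b)) /\
  (* (ii), second part *)
  (forall mu2 : R, -1 <= mu2 <= 0 ->
     ip x a * ip x b / ipnorm ip x ^+ 2 <= mu2 * ipnorm ip a * ipnorm ip b ->
     ip a b / (ipnorm ip a * ipnorm ip b) <= 2 * mu2 + 1 /\ 2 * mu2 + 1 <= 1).
Proof.
have Hpos : forall u, 0 <= ip u u by case: Hip.
have Hdef : forall u, ip u u = 0 -> u = 0 by case: Hip.
have Nsq : forall u, ipnorm ip u ^+ 2 = ip u u by move=> u; rewrite sqr_sqrtr.
have Npos : forall u, u != 0 -> 0 < ipnorm ip u.
  move=> u hu; rewrite sqrtr_gt0 lt0r Hpos andbT.
  by apply/eqP => /Hdef; apply/eqP.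
have XA := Npos _ hx; have YA := Npos _ hy; have AA := Npos _ ha; have BA := Npos _ hb.
have Xs := Nsq x; have Ys := Nsq y; have As := Nsq a; have Bs := Nsq b.
set X := ipnorm ip x in XA Xs *; set Y := ipnorm ip y in YA Ys *;
set A := ipnorm ip a in AA As *; set B := ipnorm ip b in BA Bs *.
split; last split.
- move=> d1 d2 /andP[d1p d11] /andP[d2p d21] hd.
  rewrite !ler_pdivlMr ?mulr_gt0 // => h1 h2.
  split; last by nra.
  have CS := ipCS Hip (Y *: x + X *: y) a.
  have zz : ip (Y *: x + X *: y) (Y *: x + X *: y) = 2 * (X ^+ 2 * Y ^+ 2) + 2 * (X * Y) * ip x y.
    rewrite ipDl // !ipZl // (ipS Hip x) (ipS Hip y) !ipDl // !ipZl // (ipS Hip y x) -Xs -Ys; ring.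
  have za : ip (Y *: x + X *: y) a = Y * ip x a + X * ip y a by rewrite ipDl // !ipZl.
  rewrite zz za -As in CS.
  set p := ip x a in h1 CS *; set q := ip y a in h2 CS *; set r := ip x y in CS *.
  have hc : (d1 + d2) * (X * Y * A) <= Y * p + X * q.
    have := ler_wpM2l (ltW YA) h1; have := ler_wpM2l (ltW XA) h2.
    have -> : (d1 + d2) * (X * Y * A) = Y * (d1 * (X * A)) + X * (d2 * (Y * A)) by ring.
    move=> u1 u2; exact: lerD.
  have hc2 : ((d1 + d2) * (X * Y * A)) ^+ 2 <= (Y * p + X * q) ^+ 2.
    have c0 : 0 <= (d1 + d2) * (X * Y * A) by rewrite mulr_ge0 ?mulr_ge0 ?addr_ge0 ?ltW.
    by rewrite ler_sqr ?nnegrE // (le_trans c0 hc).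
  have key : (d1 + d2) ^+ 2 * (X * Y) <= 2 * (X * Y) + 2 * r.
    have hA2 : 0 < A ^+ 2 * (X * Y) by rewrite mulr_gt0 ?exprn_gt0 ?mulr_gt0.
    rewrite -(ler_pM2r hA2).
    have E : ((d1 + d2) * (X * Y * A)) ^+ 2 = (d1 + d2) ^+ 2 * (X * Y) * (A ^+ 2 * (X * Y))
      by ring.
    have E2 : (Y * (Y * (X ^+ 2)) + X * (Y * r) + (Y * (X * r) + X * (X * Y ^+ 2))) * A ^+ 2
      = (2 * (X * Y) + 2 * r) * (A ^+ 2 * (X * Y)) by ring.
    rewrite -E -E2; apply: le_trans hc2 _.
    move: CS; congr (_ <= _).
    ring.
  nra.
- move=> mu /andP[m0 m1].
  have X2 : 0 < X ^+ 2 by rewrite exprn_gt0.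
  rewrite ler_pdivlMr // => h.
  split; first lra.
  rewrite ler_pdivlMr ?mulr_gt0 //.
  set z := (2 * ip x a) *: x - X ^+ 2 *: a.
  have CS := ipCS Hip z b.
  have zz : ip z z = X ^+ 4 * A ^+ 2.
    rewrite /z ipDl // ipNl // !ipZl // (ipS Hip x (_ - _)) (ipS Hip a (_ - _)).
    rewrite !ipDl // !ipNl // !ipZl // (ipS Hip a x) -As -Xs; ring.
  have zb : ip z b = 2 * ip x a * ip x b - X ^+ 2 * ip a b.
    by rewrite /z ipDl // ipNl // !ipZl.
  rewrite zz zb -Bs in CS.
  have : 2 * ip x a * ip x b - X ^+ 2 * ip a b <= X ^+ 2 * (A * B).
    apply: sq_le; first by rewrite mulr_ge0 ?mulr_ge0 ?exprn_ge0 ?ltW.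
    by apply: le_trans CS _; rewrite le_eqVlt; apply/orP; left; apply/eqP; ring.
  move=> H.
  have : (2 * mu - 1) * (A * B) * X ^+ 2 <= ip a b * X ^+ 2 by nra.
  by rewrite ler_pM2r.
- move=> mu /andP[m0 m1].
  have X2 : 0 < X ^+ 2 by rewrite exprn_gt0.
  rewrite ler_pdivrMr // => h.
  split; last lra.
  rewrite ler_pdivrMr ?mulr_gt0 //.
  set z := (2 * ip x a) *: x - X ^+ 2 *: a.
  have CS := ipCS Hip z b.
  have zz : ip z z = X ^+ 4 * A ^+ 2.
    rewrite /z ipDl // ipNl // !ipZl // (ipS Hip x (_ - _)) (ipS Hip a (_ - _)).
    rewrite !ipDl // !ipNl // !ipZl // (ipS Hip a x) -As -Xs; ring.
  have zb : ip z b = 2 * ip x a * ip x b - X ^+ 2 * ip a b.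
    by rewrite /z ipDl // ipNl // !ipZl.
  rewrite zz zb -Bs in CS.
  have : - (2 * ip x a * ip x b - X ^+ 2 * ip a b) <= X ^+ 2 * (A * B).
    apply: sq_le; first by rewrite mulr_ge0 ?mulr_ge0 ?exprn_ge0 ?ltW.
    by rewrite sqrrN; apply: le_trans CS _; rewrite le_eqVlt; apply/orP; left; apply/eqP; ring.
  move=> H.
  have : ip a b * X ^+ 2 <= (2 * mu + 1) * (A * B) * X ^+ 2 by lra.
  by rewrite ler_pM2r.
Qed.
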